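(* There exists a computable partial function $U$ (from pairs of binary strings to binary strings) such that $\mathrm{KS}_U$ is minimal up to an additive constant, i.e. for every computable partial function $V$ of two string arguments there is a constant $c$ with $\mathrm{KS}_U(y\mid x)\le \mathrm{KS}_V(y\mid x)+c$ for all strings $x,y$, and nevertheless $E_U(x,y)=\infty$ for some binary strings $x,y$ (so $E_U$ is not minimal up to an additive constant among the functions $E_V$).
   Context: For a computable partial function $U(p,x)$ of two binary-string arguments with binary-string values, $\mathrm{KS}_U(y\mid x)=\min\{|p|: U(p,x)=y\}$ and $E_U(x,y)=\min\{|p| : U(p,x)=y \text{ and } U(p,y)=x\}$, where $|p|$ is the length of $p$ and $\min\emptyset=\infty$. *)

(* Defs.v *)
From mathcomp Require Import all_boot.
From mathcomp Require Import boolp.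

Set Implicit Arguments.
Unset Strict Implicit.
Unset Printing Implicit Defensive.

(* Programs; arity is implicit (the argument list). *)
Inductive prf : Type :=
| PZero : prf
| PSucc : prf
| PProj : nat -> prf
| PComp : prf -> list prf -> prf
| PPrim : prf -> prf -> prf
| PMu   : prf -> prf.

Inductive eval : prf -> seq nat -> nat -> Prop :=
| ev_zero args : eval PZero args 0
| ev_succ x args : eval PSucc (x :: args) x.+1
| ev_proj i args : eval (PProj i) args (nth 0 args i)
| ev_comp f gs args ys y :
    evals gs args ys -> eval f ys y -> eval (PComp f gs) args y
| ev_prim0 f g xs y : eval f xs y -> eval (PPrim f g) (0 :: xs) y
| ev_primS f g n xs r y :
    eval (PPrim f g) (n :: xs) r -> eval g (n :: r :: xs) y ->
    eval (PPrim f g) (n.+1 :: xs) y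
| ev_mu f xs n :
    eval f (n :: xs) 0 ->
    (forall m, m < n -> exists k, eval f (m :: xs) k.+1) ->
    eval (PMu f) xs n
with evals : list prf -> seq nat -> seq nat -> Prop :=
| evs_nil args : evals nil args [::]
| evs_cons g gs args y ys :
    eval g args y -> evals gs args ys -> evals (cons g gs) args (y :: ys).

Notation bstr := (seq bool).

(* Standard bijection {0,1}^* -> nat:  [] |-> 0, b :: s |-> 2 * code s + 1 + b. *)
Fixpoint code (s : bstr) : nat :=
  match s with
  | [::] => 0
  | b :: s' => (code s').*2 + 1 + b
  end.

(* A computable partial function of two string arguments with string values is
   given by a program [U]; [app2 U p x y] means  U(p, x) = y  (defined). *)
Definition app2 (U : prf) (p x y : bstr) : Prop :=
  eval U [:: code p; code x] (code y).

(* ---------- Extended naturals (None = infinity) ---------- *)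
Definition natinf := option nat.
Definition leinf (a b : natinf) : Prop :=
  match a, b with
  | _, None => True
  | None, Some _ => False
  | Some m, Some n => m <= n
  end.
Definition addinf (a : natinf) (c : nat) : natinf :=
  match a with Some n => Some (n + c) | None => None end.

Definition min_len (P : bstr -> Prop) : natinf :=
  match pselect (exists n, exists p, size p = n /\ P p) with
  | left H => Some (ex_minn (P := fun n => `[< exists p, size p = n /\ P p >])
                      (let: ex_intro n Hn := H in ex_intro _ n (asboolT Hn)))
  | right _ => None
  end.

Definition KS (U : prf) (y x : bstr) : natinf :=
  min_len (fun p => app2 U p x y).

Definition E (U : prf) (x y : bstr) : natinf :=
  min_len (fun p => app2 U p x y /\ app2 U p y x).

(* Main.v *)
Require Import Defs.
From mathcomp Require Import all_boot zify boolp.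
Set Implicit Arguments. Unset Strict Implicit. Unset Printing Implicit Defensive.

Fixpoint eval_det f a y (H : eval f a y) {struct H} : forall y', eval f a y' -> y = y'.
Proof.
destruct H as [args|x args|i args|f gs args ys y Hs Hf|f g xs y Hf|f g n xs r y Hr Hg|f xs n H0 Hlt].
- by move=> y' H; inversion H.
- by move=> y' H; inversion H.
- by move=> y' H; inversion H.
- move=> y' H'; inversion H'; subst.
  match goal with Hs' : evals _ _ ?z, Hf' : eval _ ?z _ |- _ => rename Hs' into Hs0; rename Hf' into Hf0; rename z into ys0 end.
  have Eys : ys = ys0.
    clear H' Hf0 Hf. revert ys0 Hs0.
    refine ((fix F gs1 args1 ys1 (Hs1 : evals gs1 args1 ys1) {struct Hs1} : forall ys0, evals gs1 args1 ys0 -> ys1 = ys0 := _) gs args ys Hs).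
    destruct Hs1 as [args0|g gs0 args0 z zs Hg Hgs].
    + by move=> ys0 H0; inversion H0.
    + move=> ys0 H0; inversion H0; subst.
      match goal with A : eval g _ _, B : evals gs0 _ _ |- _ => by rewrite (eval_det _ _ _ Hg _ A) (F _ _ _ Hgs _ B) end.
  subst ys0. exact: (eval_det _ _ _ Hf _ Hf0).
- move=> y' H'; inversion H'; subst.
  match goal with A : eval f _ _ |- _ => exact: (eval_det _ _ _ Hf _ A) end.
- move=> y' H'; inversion H'; subst.
  match goal with A : eval (PPrim _ _) _ _, B : eval g _ _ |- _ =>
   have Er := eval_det _ _ _ Hr _ A; subst; exact: (eval_det _ _ _ Hg _ B) end.
- move=> y' H'; inversion H'; subst.
  match goal with A : eval f _ 0, B : forall m, _ -> exists k, _ |- _ => rename A into H1; rename B into H3 end.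
  case: (ltngtP n y') => // [lt|gt].
  + destruct (H3 _ lt) as [k Hk]. by have := eval_det _ _ _ H0 _ Hk.
  + destruct (Hlt _ gt) as [k Hk]. by have := eval_det _ _ _ Hk _ H1.
Qed.

Record repfun := RF { rfF : seq nat -> nat; rff : prf; rfok : forall a, eval rff a (rfF a) }.

Lemma evals_map (gs : seq repfun) a :
  evals (map rff gs) a (map (fun g => rfF g a) gs).
Proof. elim: gs => [|g gs IH] /=; constructor => //; exact: rfok. Qed.

Definition compR (h : repfun) (gs : seq repfun) : repfun.
refine (@RF (fun a => rfF h (map (fun g => rfF g a) gs)) (PComp (rff h) (map rff gs)) _).
move=> a; apply: ev_comp; [exact: evals_map | exact: rfok].
Defined.

Fixpoint iterR (B S : seq nat -> nat) (k : nat) (xs : seq nat) : nat :=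
  match k with 0 => B xs | k'.+1 => S [:: k', iterR B S k' xs & xs] end.

Lemma prim_eval (b s : repfun) k xs :
  eval (PPrim (rff b) (rff s)) (k :: xs) (iterR (rfF b) (rfF s) k xs).
Proof.
elim: k => [|k IH] /=; first by apply: ev_prim0; exact: rfok.
apply: ev_primS; [exact: IH | exact: rfok].
Qed.

Definition primR (b s n : repfun) (xs : seq repfun) : repfun.
refine (@RF (fun a => iterR (rfF b) (rfF s) (rfF n a) (map (fun g => rfF g a) xs))
  (PComp (PPrim (rff b) (rff s)) (rff n :: map rff xs)) _).
move=> a; apply: ev_comp; last exact: prim_eval.
constructor; [exact: rfok | exact: evals_map].
Defined.

Definition extR (r : repfun) (F : seq nat -> nat) (H : forall a, rfF r a = F a) : repfun.
refine (@RF F (rff r) _). move=> a; rewrite -H; exact: rfok.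
Defined.

Definition zeroR : repfun := @RF (fun _ => 0) PZero (fun a => ev_zero a).
Definition projR i : repfun := @RF (fun a => nth 0 a i) (PProj i) (fun a => ev_proj i a).
Definition succR : repfun.
refine (@RF (fun a => (nth 0 a 0).+1) (PComp PSucc [:: PProj 0]) _).
move=> a; apply: ev_comp; first by constructor; [exact: ev_proj | constructor].
exact: ev_succ.
Defined.

Notation "r $ gs" := (compR r gs) (at level 60, right associativity).
Notation V0 := (projR 0). Notation V1 := (projR 1). Notation V2 := (projR 2). Notation V3 := (projR 3).

Fixpoint constR (n : nat) : repfun := match n with 0 => zeroR | n'.+1 => succR $ [:: constR n'] end.
Lemma constR_ok n a : rfF (constR n) a = n.
Proof. by elim: n => //= n ->. Qed.

Definition addR0 := primR V0 (succR $ [:: V1]) V0 [:: V1].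
Lemma addR_ok a : rfF addR0 a = nth 0 a 0 + nth 0 a 1.
Proof. rewrite /=. elim: (nth 0 a 0) => //= k ->. by rewrite addSn. Qed.
Definition addR := extR addR_ok.

Definition predR0 := primR zeroR V0 V0 [::].
Lemma predR_ok a : rfF predR0 a = (nth 0 a 0).-1.
Proof. rewrite /=. by case: (nth 0 a 0). Qed.
Definition predR := extR predR_ok.

Definition subR0 := primR V0 (predR $ [:: V1]) V1 [:: V0].
Lemma subR_ok a : rfF subR0 a = nth 0 a 0 - nth 0 a 1.
Proof. rewrite /=. elim: (nth 0 a 1) => [|k IH] /=; first by rewrite subn0. by rewrite IH subnS. Qed.
Definition subR := extR subR_ok.

Definition ifzR0 := primR V0 V3 V0 [:: V1; V2].
Lemma ifzR_ok a : rfF ifzR0 a = if nth 0 a 0 == 0 then nth 0 a 1 else nth 0 a 2.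
Proof. rewrite /=. by case: (nth 0 a 0). Qed.
Definition ifzR := extR ifzR_ok.

Definition ifeqR0 := ifzR $ [:: addR $ [:: subR $ [:: V0; V1]; subR $ [:: V1; V0]]; V2; V3].
Lemma ifeqR_ok a : rfF ifeqR0 a = if nth 0 a 0 == nth 0 a 1 then nth 0 a 2 else nth 0 a 3.
Proof.
rewrite /=. set x := nth 0 a 0. set y := nth 0 a 1.
case: (eqVneq x y) => [->|ne]; first by rewrite subnn.
have -> : (x - y + (y - x) == 0) = false by apply/eqP; lia.
done.
Qed.
Definition ifeqR := extR ifeqR_ok.

Fixpoint tri k := match k with 0 => 0 | k'.+1 => tri k' + k'.+1 end.
Definition triR0 := primR zeroR (addR $ [:: V1; succR $ [:: V0]]) V0 [::].
Lemma triR_ok a : rfF triR0 a = tri (nth 0 a 0).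
Proof. rewrite /=. by elim: (nth 0 a 0) => //= k ->. Qed.
Definition triR := extR triR_ok.

Fixpoint dd n := match n with 0 => 0 | k.+1 => if tri (dd k).+1 - k.+1 == 0 then (dd k).+1 else dd k end.
Definition ddR0 := primR zeroR (ifzR $ [:: subR $ [:: triR $ [:: succR $ [:: V1]]; succR $ [:: V0]];
                                          succR $ [:: V1]; V1]) V0 [::].
Lemma ddR_ok a : rfF ddR0 a = dd (nth 0 a 0).
Proof. rewrite /=. by elim: (nth 0 a 0) => //= k ->. Qed.
Definition ddR := extR ddR_ok.

Definition pr x y := tri (x + y) + y.
Definition p2 n := n - tri (dd n).
Definition p1 n := dd n - p2 n.

Definition prR0 := addR $ [:: triR $ [:: addR $ [:: V0; V1]]; V1].
Lemma prR_ok a : rfF prR0 a = pr (nth 0 a 0) (nth 0 a 1). Proof. by []. Qed.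
Definition prR := extR prR_ok.
Definition p2R0 := subR $ [:: V0; triR $ [:: ddR $ [:: V0]]].
Lemma p2R_ok a : rfF p2R0 a = p2 (nth 0 a 0). Proof. by []. Qed.
Definition p2R := extR p2R_ok.
Definition p1R0 := subR $ [:: ddR $ [:: V0]; p2R $ [:: V0]].
Lemma p1R_ok a : rfF p1R0 a = p1 (nth 0 a 0). Proof. by []. Qed.
Definition p1R := extR p1R_ok.

Lemma triS k : tri k.+1 = tri k + k.+1. Proof. by []. Qed.
Lemma tri_mono a b : a <= b -> tri a <= tri b.
Proof. elim: b => [|b IH]; first by rewrite leqn0 => /eqP ->. rewrite leq_eqVlt => /orP [/eqP ->//|]. rewrite ltnS => /IH. rewrite triS; lia. Qed.

Lemma dd_spec n : tri (dd n) <= n < tri (dd n).+1.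
Proof.
elim: n => [|n IH] //=.
set d := dd n in IH *. move: IH; rewrite ?triS => IH.
case: eqP => E; rewrite ?triS; lia.
Qed.

Lemma dd_unique d n : tri d <= n < tri d.+1 -> dd n = d.
Proof.
move=> H; have H2 := dd_spec n.
case: (ltngtP (dd n) d) => // lt.
- have := tri_mono lt; lia.
- have := tri_mono lt; lia.
Qed.

Lemma dd_pr x y : dd (pr x y) = x + y.
Proof. apply: dd_unique; rewrite /pr ?triS; lia. Qed.
Lemma p2_pr x y : p2 (pr x y) = y. Proof. rewrite /p2 dd_pr /pr; lia. Qed.
Lemma p1_pr x y : p1 (pr x y) = x. Proof. rewrite /p1 p2_pr dd_pr; lia. Qed.
Lemma pr_surj n : pr (p1 n) (p2 n) = n.
Proof. have := dd_spec n; rewrite /pr /p1 /p2 ?triS => H.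
have -> : dd n - (n - tri (dd n)) + (n - tri (dd n)) = dd n by lia. lia. Qed.
Lemma pr00 : pr 0 0 = 0. Proof. by []. Qed.
Lemma p1_0 : p1 0 = 0. Proof. by []. Qed.
Lemma p2_0 : p2 0 = 0. Proof. by []. Qed.

Arguments pr : simpl never. Arguments p1 : simpl never. Arguments p2 : simpl never.

Definition hd_ n := p1 n.-1.
Definition tl_ n := p2 n.-1.
Definition cons_ x l := (pr x l).+1.
Definition nth_ l i := hd_ (iter i tl_ l).
Arguments hd_ : simpl never. Arguments tl_ : simpl never. Arguments cons_ : simpl never.
Arguments nth_ : simpl never.

Definition hdR0 := p1R $ [:: predR $ [:: V0]].
Lemma hdR_ok a : rfF hdR0 a = hd_ (nth 0 a 0). Proof. by []. Qed.
Definition hdR := extR hdR_ok.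
Definition tlR0 := p2R $ [:: predR $ [:: V0]].
Lemma tlR_ok a : rfF tlR0 a = tl_ (nth 0 a 0). Proof. by []. Qed.
Definition tlR := extR tlR_ok.
Definition consR0 := succR $ [:: prR $ [:: V0; V1]].
Lemma consR_ok a : rfF consR0 a = cons_ (nth 0 a 0) (nth 0 a 1). Proof. by []. Qed.
Definition consR := extR consR_ok.
Definition nthR0 := hdR $ [:: primR V0 (tlR $ [:: V1]) V1 [:: V0]].
Lemma nthR_ok a : rfF nthR0 a = nth_ (nth 0 a 0) (nth 0 a 1).
Proof. rewrite /= /nth_. congr hd_. by elim: (nth 0 a 1) => //= k ->. Qed.
Definition nthR := extR nthR_ok.

Fixpoint enc_l (l : seq nat) : nat := match l with [::] => 0 | x :: l' => cons_ x (enc_l l') end.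
Lemma hd_cons x l : hd_ (cons_ x l) = x. Proof. by rewrite /hd_ /cons_ /= p1_pr. Qed.
Lemma tl_cons x l : tl_ (cons_ x l) = l. Proof. by rewrite /tl_ /cons_ /= p2_pr. Qed.
Lemma hd_0 : hd_ 0 = 0. Proof. by []. Qed.
Lemma tl_0 : tl_ 0 = 0. Proof. by []. Qed.
Lemma cons_neq0 x l : (cons_ x l == 0) = false. Proof. by []. Qed.
Lemma nth_enc l i : nth_ (enc_l l) i = nth 0 l i.
Proof.
have I0 j : iter j tl_ 0 = 0 by elim: j => //= j ->.
rewrite /nth_. elim: i l => [|i IH] [|x l] //=.
- by rewrite hd_cons.
- by rewrite I0.
- by rewrite -iterS iterSr tl_cons IH.
Qed.

Definition parR0 := primR zeroR (subR $ [:: constR 1; V1]) V0 [::].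
Lemma parR_ok a : rfF parR0 a = odd (nth 0 a 0).
Proof. rewrite /=. elim: (nth 0 a 0) => //= k ->. by case: (odd k). Qed.
Definition parR := extR parR_ok.
Definition halfR0 := primR zeroR (addR $ [:: V1; parR $ [:: V0]]) V0 [::].
Lemma halfR_ok a : rfF halfR0 a = (nth 0 a 0)./2.
Proof. rewrite /=. elim: (nth 0 a 0) => //= k ->. by rewrite uphalf_half addnC. Qed.
Definition halfR := extR halfR_ok.
Definition strip n := (n.-1)./2.
Definition stripR0 := halfR $ [:: predR $ [:: V0]].
Lemma stripR_ok a : rfF stripR0 a = strip (nth 0 a 0). Proof. by []. Qed.
Definition stripR := extR stripR_ok.
Definition stripkR0 := primR V0 (stripR $ [:: V1]) V0 [:: V1].
Lemma stripkR_ok a : rfF stripkR0 a = iter (nth 0 a 0) strip (nth 0 a 1).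
Proof. rewrite /=. by elim: (nth 0 a 0) => //= k ->. Qed.
Definition stripkR := extR stripkR_ok.

Fixpoint cP (f : prf) : nat :=
  match f with
  | PZero => pr 0 0 | PSucc => pr 1 0 | PProj i => pr 2 i
  | PComp h gs => pr 3 (pr (cP h) (enc_l (rev (map cP gs))))
  | PPrim b s => pr 4 (pr (cP b) (cP s))
  | PMu h => pr 5 (cP h)
  end.

Definition ev cf args K := pr 0 (pr cf (pr args K)).
Definition ret y K := pr 1 (pr y K).
Definition fcomp cf L args acc := pr 0 (pr cf (pr L (pr args acc))).
Definition fprim cg k xs := pr 1 (pr cg (pr k xs)).
Definition fmu cf xs n := pr 2 (pr cf (pr xs n)).
Definition compnext cf L args acc K :=
  if L == 0 then ev cf acc K else ev (hd_ L) args (cons_ (fcomp cf (tl_ L) args acc) K).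

Definition step s :=
 if p1 s == 0 then
   let b := p2 s in let cf := p1 b in let args := p1 (p2 b) in let K := p2 (p2 b) in
   let t := p1 cf in let d := p2 cf in
   if t == 0 then ret 0 K
   else if t == 1 then ret (hd_ args).+1 K
   else if t == 2 then ret (nth_ args d) K
   else if t == 3 then compnext (p1 d) (p2 d) args 0 K
   else if t == 4 then (if hd_ args == 0 then ev (p1 d) (tl_ args) K
                        else ev cf (cons_ (hd_ args).-1 (tl_ args)) (cons_ (fprim (p2 d) (hd_ args).-1 (tl_ args)) K))
   else ev d (cons_ 0 args) (cons_ (fmu d args 0) K)
 else
   let b := p2 s in let y := p1 b in let K := p2 b in
   if K == 0 then s else
   let fr := hd_ K in let K' := tl_ K in let ft := p1 fr in let fb := p2 fr in
   if ft == 0 then compnext (p1 fb) (p1 (p2 fb)) (p1 (p2 (p2 fb))) (cons_ y (p2 (p2 (p2 fb)))) K'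
   else if ft == 1 then ev (p1 fb) (cons_ (p1 (p2 fb)) (cons_ y (p2 (p2 fb)))) K'
   else if y == 0 then ret (p2 (p2 fb)) K'
   else ev (p1 fb) (cons_ (p2 (p2 fb)).+1 (p1 (p2 fb))) (cons_ (fmu (p1 fb) (p1 (p2 fb)) (p2 (p2 fb)).+1) K').

Definition evR0 := prR $ [:: zeroR; prR $ [:: V0; prR $ [:: V1; V2]]].
Lemma evR_ok a : rfF evR0 a = ev (nth 0 a 0) (nth 0 a 1) (nth 0 a 2). Proof. by []. Qed.
Definition evR := extR evR_ok.
Definition retR0 := prR $ [:: constR 1; prR $ [:: V0; V1]].
Lemma retR_ok a : rfF retR0 a = ret (nth 0 a 0) (nth 0 a 1). Proof. by []. Qed.
Definition retR := extR retR_ok.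
Definition fcompR0 := prR $ [:: zeroR; prR $ [:: V0; prR $ [:: V1; prR $ [:: V2; V3]]]].
Lemma fcompR_ok a : rfF fcompR0 a = fcomp (nth 0 a 0) (nth 0 a 1) (nth 0 a 2) (nth 0 a 3). Proof. by []. Qed.
Definition fcompR := extR fcompR_ok.
Definition fprimR0 := prR $ [:: constR 1; prR $ [:: V0; prR $ [:: V1; V2]]].
Lemma fprimR_ok a : rfF fprimR0 a = fprim (nth 0 a 0) (nth 0 a 1) (nth 0 a 2). Proof. by []. Qed.
Definition fprimR := extR fprimR_ok.
Definition fmuR0 := prR $ [:: constR 2; prR $ [:: V0; prR $ [:: V1; V2]]].
Lemma fmuR_ok a : rfF fmuR0 a = fmu (nth 0 a 0) (nth 0 a 1) (nth 0 a 2). Proof. by []. Qed.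
Definition fmuR := extR fmuR_ok.
Definition compnextR0 := ifzR $ [:: V1; evR $ [:: V0; projR 3; projR 4];
   evR $ [:: hdR $ [:: V1]; V2; consR $ [:: fcompR $ [:: V0; tlR $ [:: V1]; V2; V3]; projR 4]]].
Lemma compnextR_ok a : rfF compnextR0 a = compnext (nth 0 a 0) (nth 0 a 1) (nth 0 a 2) (nth 0 a 3) (nth 0 a 4).
Proof. by []. Qed.
Definition compnextR := extR compnextR_ok.

Definition P1 r := p1R $ [:: r]. Definition P2 r := p2R $ [:: r].
Definition sb := P2 V0.
Definition scf := P1 sb. Definition sargs := P1 (P2 sb). Definition sK := P2 (P2 sb).
Definition st := P1 scf. Definition sd := P2 scf.
Definition ry := P1 sb. Definition rK := P2 sb.
Definition rfr := hdR $ [:: rK]. Definition rK' := tlR $ [:: rK].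
Definition rft := P1 rfr. Definition rfb := P2 rfr.
Definition IFZ c x y := ifzR $ [:: c; x; y].
Definition IFEQ c k x y := ifeqR $ [:: c; constR k; x; y].
Definition hdA := hdR $ [:: sargs]. Definition tlA := tlR $ [:: sargs].

Definition stepR0 :=
 IFZ (P1 V0)
   (IFZ st (retR $ [:: zeroR; sK])
   (IFEQ st 1 (retR $ [:: succR $ [:: hdA]; sK])
   (IFEQ st 2 (retR $ [:: nthR $ [:: sargs; sd]; sK])
   (IFEQ st 3 (compnextR $ [:: P1 sd; P2 sd; sargs; zeroR; sK])
   (IFEQ st 4 (IFZ hdA (evR $ [:: P1 sd; tlA; sK])
                 (evR $ [:: scf; consR $ [:: predR $ [:: hdA]; tlA];
                     consR $ [:: fprimR $ [:: P2 sd; predR $ [:: hdA]; tlA]; sK]]))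
   (evR $ [:: sd; consR $ [:: zeroR; sargs]; consR $ [:: fmuR $ [:: sd; sargs; zeroR]; sK]]))))))
   (IFZ rK V0
   (IFZ rft (compnextR $ [:: P1 rfb; P1 (P2 rfb); P1 (P2 (P2 rfb)); consR $ [:: ry; P2 (P2 (P2 rfb))]; rK'])
   (IFEQ rft 1 (evR $ [:: P1 rfb; consR $ [:: P1 (P2 rfb); consR $ [:: ry; P2 (P2 rfb)]]; rK'])
   (IFZ ry (retR $ [:: P2 (P2 rfb); rK'])
     (evR $ [:: P1 rfb; consR $ [:: succR $ [:: P2 (P2 rfb)]; P1 (P2 rfb)];
         consR $ [:: fmuR $ [:: P1 rfb; P1 (P2 rfb); succR $ [:: P2 (P2 rfb)]]; rK']]))))).
Lemma stepR_ok a : rfF stepR0 a = step (nth 0 a 0).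
Proof. reflexivity. Qed.
Definition stepR := extR stepR_ok.

Arguments pr : simpl never. Arguments p1 : simpl never. Arguments p2 : simpl never.
Arguments hd_ : simpl never. Arguments tl_ : simpl never. Arguments cons_ : simpl never.
Arguments nth_ : simpl never.

Ltac prs := repeat first [rewrite p1_pr | rewrite p2_pr | rewrite hd_cons | rewrite tl_cons | rewrite cons_neq0].
Ltac sstep := rewrite /step /ev /ret /fcomp /fprim /fmu; rewrite ?[cP _]/= ?[enc_l _]/=; cbv zeta; prs; rewrite /=.

Lemma step_zero args K : step (ev (cP PZero) args K) = ret 0 K.
Proof. by sstep. Qed.
Lemma step_succ x args K : step (ev (cP PSucc) (enc_l (x :: args)) K) = ret x.+1 K.
Proof. by sstep. Qed.
Lemma step_proj i args K : step (ev (cP (PProj i)) (enc_l args) K) = ret (nth 0 args i) K.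
Proof. by sstep; rewrite nth_enc. Qed.
Lemma step_comp f gs args K : step (ev (cP (PComp f gs)) args K) =
   compnext (cP f) (enc_l (rev (map cP gs))) args (enc_l [::]) K.
Proof. by sstep. Qed.
Lemma step_prim0 f g xs K : step (ev (cP (PPrim f g)) (enc_l (0 :: xs)) K) = ev (cP f) (enc_l xs) K.
Proof. by sstep. Qed.
Lemma step_primS f g n xs K : step (ev (cP (PPrim f g)) (enc_l (n.+1 :: xs)) K) =
  ev (cP (PPrim f g)) (enc_l (n :: xs)) (cons_ (fprim (cP g) n (enc_l xs)) K).
Proof. by sstep. Qed.
Lemma step_mu f xs K : step (ev (cP (PMu f)) (enc_l xs) K) =
  ev (cP f) (enc_l (0 :: xs)) (cons_ (fmu (cP f) (enc_l xs) 0) K).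
Proof. by sstep. Qed.
Lemma step_rcomp y cf L A acc K : step (ret y (cons_ (fcomp cf L A acc) K)) = compnext cf L A (cons_ y acc) K.
Proof. by sstep. Qed.
Lemma step_rprim y cg k xs K : step (ret y (cons_ (fprim cg k xs) K)) = ev cg (cons_ k (cons_ y xs)) K.
Proof. by sstep. Qed.
Lemma step_rmu y cf A m K : step (ret y (cons_ (fmu cf A m) K)) =
  if y == 0 then ret m K else ev cf (cons_ m.+1 A) (cons_ (fmu cf A m.+1) K).
Proof. by sstep. Qed.
Lemma step_halt y : step (ret y 0) = ret y 0.
Proof. by sstep. Qed.
Lemma compnext_nil cf A acc K : compnext cf (enc_l [::]) A acc K = ev cf acc K.
Proof. by []. Qed.
Lemma compnext_cons cf g L A acc K : compnext cf (enc_l (g :: L)) A acc K =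
   ev g A (cons_ (fcomp cf (enc_l L) A acc) K).
Proof. rewrite /compnext [enc_l _]/=. prs. by []. Qed.

Definition reach s s' := exists t, iter t step s = s'.
Lemma reach_refl s : reach s s. Proof. by exists 0. Qed.
Lemma reach_trans s1 s2 s3 : reach s1 s2 -> reach s2 s3 -> reach s1 s3.
Proof. move=> [a Ha] [b Hb]; exists (b + a); by rewrite iterD Ha. Qed.
Lemma reach_step s s1 s' : step s = s1 -> reach s1 s' -> reach s s'.
Proof. move=> E [b Hb]; exists b.+1; by rewrite iterSr E. Qed.

Lemma mu_loop cf xs n K :
  (forall m, m < n -> exists k, forall K', reach (ev cf (enc_l (m :: xs)) K') (ret k.+1 K')) ->
  (forall K', reach (ev cf (enc_l (n :: xs)) K') (ret 0 K')) ->
  reach (ev cf (enc_l (0 :: xs)) (cons_ (fmu cf (enc_l xs) 0) K)) (ret n K).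
Proof.
move=> Hlt Hn.
suff H : forall j, j <= n -> reach (ev cf (enc_l ((n - j) :: xs)) (cons_ (fmu cf (enc_l xs) (n - j)) K)) (ret n K).
  by have := H n (leqnn n); rewrite subnn.
elim=> [_|j IH lt].
- rewrite subn0. apply: reach_trans (Hn _) _. apply: reach_step (step_rmu _ _ _ _ _) _. by apply: reach_refl.
- have [k Hk] := Hlt (n - j.+1) ltac:(lia).
  apply: reach_trans (Hk _) _. apply: reach_step (step_rmu _ _ _ _ _) _ => /=.
  have -> : (n - j.+1).+1 = n - j by lia.
  exact: IH (ltnW lt).
Qed.

Lemma sim f args y : eval f args y -> forall K, reach (ev (cP f) (enc_l args) K) (ret y K)
with sims gs args ys : evals gs args ys -> forall cf L acc K,
  reach (compnext cf (enc_l (rev (map cP gs) ++ L)) (enc_l args) (enc_l acc) K)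
        (compnext cf (enc_l L) (enc_l args) (enc_l (ys ++ acc)) K).
Proof.
- destruct 1 as [args|x args|i args|f gs args ys y Hs Hf|f g xs y Hf|f g n xs r y Hr Hg|f xs n H0 Hlt]; move=> K.
  + apply: reach_step (step_zero _ _) _; exact: reach_refl.
  + apply: reach_step (step_succ _ _ _) _; exact: reach_refl.
  + apply: reach_step (step_proj _ _ _) _; exact: reach_refl.
  + apply: reach_step (step_comp _ _ _ _) _.
    have := sims _ _ _ Hs (cP f) [::] [::] K. rewrite cats0 compnext_nil => H1.
    apply: reach_trans H1 _. rewrite cats0. exact: sim _ _ _ Hf K.
  + apply: reach_step (step_prim0 _ _ _ _) _. exact: sim _ _ _ Hf K.
  + apply: reach_step (step_primS _ _ _ _ _) _.
    apply: reach_trans (sim _ _ _ Hr _) _.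
    apply: reach_step (step_rprim _ _ _ _ _) _. exact: (sim _ _ _ Hg K).
  + apply: reach_step (step_mu _ _ _) _. apply: mu_loop.
    * move=> m Hm. destruct (Hlt m Hm) as [k Hk]. exists k. exact: sim _ _ _ Hk.
    * exact: sim _ _ _ H0.
- destruct 1 as [args|g gs args y ys Hg Hgs]; move=> cf L acc K.
  + exact: reach_refl.
  + rewrite /= rev_cons cat_rcons.
    apply: reach_trans (sims _ _ _ Hgs cf (cP g :: L) acc K) _.
    rewrite compnext_cons.
    apply: reach_trans (sim _ _ _ Hg _) _.
    apply: reach_step (step_rcomp _ _ _ _ _ _) _. exact: reach_refl.
Qed.

Arguments pr : simpl never. Arguments p1 : simpl never. Arguments p2 : simpl never.
Arguments hd_ : simpl never. Arguments tl_ : simpl never. Arguments cons_ : simpl never.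
Arguments nth_ : simpl never. Arguments step : simpl never.

Definition runR0 := primR V0 (stepR $ [:: V1]) V0 [:: V1].
Lemma runR_ok a : rfF runR0 a = iter (nth 0 a 0) step (nth 0 a 1).
Proof. rewrite /=. by elim: (nth 0 a 0) => //= k ->. Qed.
Definition runR := extR runR_ok.

Definition init m n xc := ev m (cons_ (iter m.+2 strip n) (cons_ xc 0)) 0.
Definition initR0 := evR $ [:: V0; consR $ [:: stripkR $ [:: succR $ [:: succR $ [:: V0]]; V1];
                                           consR $ [:: V2; zeroR]]; zeroR].
Lemma initR_ok a : rfF initR0 a = init (nth 0 a 0) (nth 0 a 1) (nth 0 a 2). Proof. by []. Qed.
Definition initR := extR initR_ok.

Definition halted s := (p1 s == 1) && (p2 (p2 s) == 0).
Definition SS := runR $ [:: V0; initR $ [:: V1; V2; V3]].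
Definition HR0 := IFEQ (P1 SS) 1 (IFZ (P2 (P2 SS)) zeroR (constR 1)) (constR 1).
Lemma HR_ok a : rfF HR0 a =
  if halted (iter (nth 0 a 0) step (init (nth 0 a 1) (nth 0 a 2) (nth 0 a 3))) then 0 else 1.
Proof. rewrite /= /halted. by case: eqP => //= _; case: eqP. Qed.
Definition HR := extR HR_ok.
Definition OutR0 := P1 (P2 SS).
Lemma OutR_ok a : rfF OutR0 a = p1 (p2 (iter (nth 0 a 0) step (init (nth 0 a 1) (nth 0 a 2) (nth 0 a 3)))).
Proof. by []. Qed.
Definition OutR := extR OutR_ok.

Definition Run := PComp (rff OutR) [:: PMu (rff HR); PProj 0; PProj 1; PProj 2].

Lemma iter_halt t y : iter t step (ret y 0) = ret y 0.
Proof. elim: t => //= t ->; exact: step_halt. Qed.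

Lemma halted_ret s : halted s -> s = ret (p1 (p2 s)) 0.
Proof.
case/andP => /eqP E1 /eqP E2. rewrite /ret -E1 -E2 !pr_surj. by [].
Qed.

Lemma ret_inj y y' : ret y 0 = ret y' 0 -> y = y'.
Proof. move=> E. have := congr1 (fun s => p1 (p2 s)) E. by rewrite /ret !p2_pr !p1_pr. Qed.

Lemma Run_ok V n xc y : eval V [:: iter (cP V).+2 strip n; xc] y -> eval Run [:: cP V; n; xc] y.
Proof.
move=> HV.
have [t Ht] := sim HV 0.
set s0 := init (cP V) n xc.
have Es0 : ev (cP V) (enc_l [:: iter (cP V).+2 strip n; xc]) 0 = s0 by [].
rewrite Es0 in Ht.
have Hex : exists t, halted (iter t step s0) by exists t; rewrite Ht /halted /ret !p2_pr !p1_pr.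
pose t0 := ex_minn Hex.
have Ht0 : halted (iter t0 step s0) by rewrite /t0; case: ex_minnP.
have Hmin : forall m, m < t0 -> ~~ halted (iter m step s0).
  move=> m lt; apply/negP => Hm. rewrite /t0 in lt. move: lt; case: ex_minnP => z _ Hz lt.
  have := Hz _ Hm. lia.
have Hle : t0 <= t.
  rewrite /t0; case: ex_minnP => z _ Hz. apply: Hz. by rewrite Ht /halted /ret !p2_pr !p1_pr.
have Hy : p1 (p2 (iter t0 step s0)) = y.
  have E := halted_ret Ht0.
  have : iter t step s0 = ret (p1 (p2 (iter t0 step s0))) 0.
    by rewrite -(subnK Hle) iterD {1}E iter_halt.
  rewrite Ht => /ret_inj ->. by [].
apply: (@ev_comp _ _ _ [:: t0; cP V; n; xc]).
- constructor; last by repeat constructor.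
  apply: ev_mu.
  + have := rfok HR [:: t0; cP V; n; xc]. by rewrite /= Ht0.
  + move=> m lt. exists 0. have := rfok HR [:: m; cP V; n; xc]. by rewrite [rfF HR _]/= -/s0 (negbTE (Hmin _ lt)).
- have := rfok OutR [:: t0; cP V; n; xc]. by rewrite [rfF OutR _]/= -/s0 Hy.
Qed.

Arguments pr : simpl never. Arguments p1 : simpl never. Arguments p2 : simpl never.
Arguments hd_ : simpl never. Arguments tl_ : simpl never. Arguments cons_ : simpl never.
Arguments nth_ : simpl never. Arguments step : simpl never. Arguments strip : simpl never.

Definition PR0 := ifeqR $ [:: subR $ [:: constR 1; parR $ [:: V1]]; IFEQ V2 2 (constR 1) zeroR;
                      IFZ (parR $ [:: stripkR $ [:: succR $ [:: V0]; V1]]) (constR 1) zeroR; constR 1].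
Definition cnd n xc := (1 - odd n) == (if xc == 2 then 1 else 0).
Lemma PR_ok a : rfF PR0 a = if cnd (nth 0 a 1) (nth 0 a 2) then
   (if odd (iter (nth 0 a 0).+1 strip (nth 0 a 1)) then 0 else 1) else 1.
Proof. rewrite /= /cnd /=. by case: (odd (strip _)). Qed.
Definition PR := extR PR_ok.
Lemma PR_F k n xc : rfF PR [:: k; n; xc] = if cnd n xc then (if odd (iter k.+1 strip n) then 0 else 1) else 1.
Proof. by []. Qed.

Definition U := PComp Run [:: PMu (rff PR); PProj 0; PProj 1].

Lemma strip_cons b s : strip (code (b :: s)) = code s.
Proof. rewrite /strip /= addn1 /=. rewrite -{2}(half_bit_double (code s) b). congr half. rewrite addnC. by case: b. Qed.
Lemma strip_nil : strip (code [::]) = 0. Proof. by []. Qed.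
Lemma iter_strip k s : iter k strip (code s) = code (drop k s).
Proof.
elim: k s => [|k IH] s; first by rewrite drop0.
rewrite iterSr. case: s => [|b s].
- have -> : strip (code [::]) = code [::] by []. by rewrite IH.
- by rewrite strip_cons IH.
Qed.
Lemma odd_code b s : odd (code (b :: s)) = ~~ b.
Proof. rewrite /= addn1 /=. case: b => /=; by rewrite ?addn0 ?addn1 /= ?odd_double. Qed.

Lemma U_ok V p x y : app2 V p x y ->
  app2 U ((code x == 2) :: nseq (cP V) true ++ false :: p) x y.
Proof.
rewrite /app2 => HV.
set p' := (_ :: nseq _ _ ++ _).
have Hdrop : forall k, k <= cP V -> drop k.+1 p' = nseq (cP V - k) true ++ false :: p.
  move=> k lk. by rewrite /p' /= drop_cat size_nseq ltn_neqAle lk andbT drop_nseq; case: eqP => [->|]; rewrite ?subnn ?drop0.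
have Hc : cnd (code p') (code x).
  rewrite /cnd /p' odd_code. by case: (code x == 2).
apply: (@ev_comp _ _ _ [:: cP V; code p'; code x]).
- constructor; last by repeat constructor.
  apply: ev_mu.
  + have := rfok PR [:: cP V; code p'; code x]. rewrite PR_F Hc iter_strip Hdrop // subnn odd_code. move=> H; exact: H.

  + move=> m lt. exists 0. have := rfok PR [:: m; code p'; code x].
    rewrite PR_F Hc iter_strip Hdrop ?(ltnW lt) //.
    have -> : cP V - m = (cP V - m).-1.+1 by lia.
    rewrite [nseq _.+1 _]/= cat_cons odd_code. move=> H; exact: H.
- apply: Run_ok. rewrite iter_strip.
  have -> : drop (cP V).+2 p' = p.
    by rewrite -[(cP V).+2]/(1 + (cP V).+1) -drop_drop Hdrop // subnn /= drop0.
  exact: HV.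
Qed.

Lemma inv_comp f gs a y : eval (PComp f gs) a y -> exists ys, evals gs a ys /\ eval f ys y.
Proof. move=> H; inversion H; subst; eauto. Qed.
Lemma inv_cons g gs a ys : evals (g :: gs) a ys -> exists z zs, ys = z :: zs /\ eval g a z.
Proof. move=> H; inversion H; subst; eauto. Qed.
Lemma inv_mu f xs n : eval (PMu f) xs n -> eval f (n :: xs) 0.
Proof. move=> H; inversion H; subst; eauto. Qed.

Lemma U_cnd p' xc y : eval U [:: p'; xc] y -> cnd p' xc.
Proof.
move=> H. have [ys [Hs _]] := inv_comp H.
have [z [zs [_ Hz]]] := inv_cons Hs.
have := eval_det (rfok PR _) (inv_mu Hz).
rewrite PR_F. by case: (cnd _ _).
Qed.

Lemma min_len_some (P : bstr -> Prop) p : P p -> exists k, min_len P = Some k /\ k <= size p.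
Proof.
move=> Hp. rewrite /min_len. case: pselect => [H|H]; last by exfalso; apply: H; exists (size p), p.
eexists; split; first reflexivity.
case: ex_minnP => m _ Hm. apply: Hm. apply/asboolP. by exists p.
Qed.

Lemma min_len_inv (P : bstr -> Prop) k : min_len P = Some k -> exists p, size p = k /\ P p.
Proof.
rewrite /min_len. case: pselect => [H|H] // [<-].
case: ex_minnP => m Pm _. by move/asboolP: Pm.
Qed.

Theorem proposition1 :
  exists U : prf,
    (forall V : prf, exists c : nat,
       forall x y : seq bool, leinf (KS U y x) (addinf (KS V y x) c)) /\
    (exists x y : seq bool, E U x y = None).
Proof.
exists U; split.
- move=> V; exists (cP V).+2 => x y.
  case E1: (KS V y x) => [k|]; last by case: (KS U y x).
  have [p [Hs Hp]] := min_len_inv E1.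
  have [k' [Ek' Hk']] := @min_len_some (fun p => app2 U p x y) _ (U_ok Hp).
  rewrite /KS Ek' /=. move: Hk'. rewrite /= size_cat size_nseq /= Hs. lia.
- exists [::], [:: true]. rewrite /E /min_len. case: pselect => // HH.
  exfalso. case: HH => [n [p [_ [H1 H2]]]]. have := U_cnd H1. have := U_cnd H2. rewrite /cnd /=.
  by case: (odd (code p)).
Qed.
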